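(* Let $\rho_{Q^n}$ be an arbitrary normalized state on $Q^{\otimes n}$ and let $\{P,I-P\}$ be a two-outcome POVM on $Q$ with $\|P\|_\infty\le\delta$. Let $\boldsymbol N_P$ be the number of $P$-outcomes when each subsystem of $\rho_{Q^n}$ is measured with $\{P,I-P\}$. Then $$\Pr\Big(\frac{\boldsymbol N_P}{n}\ge\delta+c\Big)\le\sum_{i=n(\delta+c)}^{n}\binom ni\delta^i(1-\delta)^{n-i}$$ (sum over integers $i$ with $n(\delta+c)\le i\le n$). *)

(* Defs.v *)
From mathcomp Require Import all_boot all_order all_algebra all_field.
Set Implicit Arguments. Unset Strict Implicit. Unset Printing Implicit Defensive.
Import Order.TTheory GRing.Theory Num.Theory.
Local Open Scope ring_scope.

(* Computational basis of Q^{(x)n}, Q = C^d: strings x : 'I_n -> 'I_d.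
   Operators on a finite-dim Hilbert space with basis I are kernels I -> I -> C. *)
Definition basisn (n d : nat) : finType := {ffun 'I_n -> 'I_d}.

Definition hermitian (I : finType) (A : I -> I -> algC) : Prop :=
  forall x y, A y x = (A x y)^*.
Definition psd (I : finType) (A : I -> I -> algC) : Prop :=
  hermitian A /\
  forall v : I -> algC, 0 <= \sum_x \sum_y (v x)^* * A x y * v y.

Definition is_state (n d : nat) (rho : basisn n d -> basisn n d -> algC) : Prop :=
  psd rho /\ \sum_x rho x x = 1.

Definition is_two_povm (d : nat) (P : 'M[algC]_d) : Prop :=
  psd (fun i j => P i j) /\ psd (fun i j => (1%:M - P) i j).

Definition opnorm_le (d : nat) (P : 'M[algC]_d) (delta : algC) : Prop :=
  0 <= delta /\
  forall v : 'cV[algC]_d,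
    \sum_i `|(P *m v) i 0| ^+ 2 <= delta ^+ 2 * \sum_i `|v i 0| ^+ 2.

Definition povm_elem (d : nat) (P : 'M[algC]_d) (b : bool) : 'M[algC]_d :=
  if b then P else 1%:M - P.

Definition prod_elem (n d : nat) (P : 'M[algC]_d) (s : {ffun 'I_n -> bool})
  (x y : basisn n d) : algC :=
  \prod_(i < n) povm_elem P (s i) (x i) (y i).

(* Born rule: probability of outcome string s, Tr(rho E_s). *)
Definition outcome_prob (n d : nat) (rho : basisn n d -> basisn n d -> algC)
  (P : 'M[algC]_d) (s : {ffun 'I_n -> bool}) : algC :=
  \sum_x \sum_y rho x y * prod_elem P s y x.

Definition NP (n : nat) (s : {ffun 'I_n -> bool}) : nat := #|[set i | s i]|.

Definition prob_NP_ge (n d : nat) (rho : basisn n d -> basisn n d -> algC)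
  (P : 'M[algC]_d) (delta c : algC) : algC :=
  \sum_(s : {ffun 'I_n -> bool} | delta + c <= (NP s)%:R / n%:R)
    outcome_prob rho P s.

(* Main.v *)
Require Import Defs.
From mathcomp Require Import all_boot all_order all_algebra all_field.
From mathcomp Require Import ring.
Import Order.TTheory GRing.Theory Num.Theory.
Local Open Scope ring_scope.
Local Open Scope sesquilinear_scope.

Lemma spec d (P : 'M[algC]_d) (delta : algC) :
  psd (fun i j => P i j) -> opnorm_le P delta ->
  exists (M : 'M[algC]_d) (lam : 'I_d -> algC),
  [/\ forall a b, \sum_k (M k a)^* * M k b = (a == b)%:R,
      forall j k, \sum_y M j y * (M k y)^* = (j == k)%:R,
      forall a b, P a b = \sum_k (M k a)^* * lam k * M k b &
      forall k, 0 <= lam k /\ lam k <= delta].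
Proof.
move=> [herm psdP] [d0 hn].
have hN : P \is normalmx.
  apply/normalmxP.
  have -> : P ^t* = P by apply/matrixP => i j; rewrite !mxE; have /= -> := herm j i.
  by [].
have eP := orthomx_spectralP hN.
have hU := spectral_unitarymx P.
move: eP; set M := spectralmx P; set L := spectral_diag P => eP.
rewrite invmx_unitary // in eP.
have o1 : forall j k, \sum_y M j y * (M k y)^* = (j == k)%:R.
  move=> j k; move/unitarymxP: hU => /matrixP/(_ j k); rewrite !mxE => <-.
  by apply: eq_bigr => y _; rewrite !mxE.
have o2 : forall a b, \sum_k (M k a)^* * M k b = (a == b)%:R.
  move=> a b; have := mulVmx (unitarymx_unit hU).
  rewrite invmx_unitary // => /matrixP/(_ a b); rewrite !mxE => <-.
  by apply: eq_bigr => y _; rewrite !mxE.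
have Pr : forall a b, P a b = \sum_k (M k a)^* * L 0 k * M k b.
  move=> a b; rewrite eP mul_mx_diag !mxE.
  by apply: eq_bigr => k _; rewrite !mxE.
have Pu : forall a k, \sum_b P a b * (M k b)^* = (M k a)^* * L 0 k.
  move=> a k.
  transitivity (\sum_j (M j a)^* * L 0 j * \sum_b (M j b * (M k b)^*)).
    under eq_bigr do rewrite Pr mulr_suml.
    rewrite exchange_big /=; apply: eq_bigr => j _; rewrite mulr_sumr.
    by apply: eq_bigr => b _; rewrite mulrA.
  under eq_bigr do rewrite o1.
  rewrite (bigD1 k) //= big1 ?addr0; first by rewrite eqxx mulr1.
  by move=> j /negbTE jk; rewrite jk mulr0.
exists M, (fun k => L 0 k); split => // k.
have lge0 : 0 <= L 0 k.
  have := psdP (fun a => (M k a)^*).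
  have -> : \sum_x \sum_y ((M k x)^*)^* * P x y * (M k y)^* = L 0 k.
    transitivity (\sum_x M k x * (M k x)^* * L 0 k).
      apply: eq_bigr => x _; rewrite conjCK -mulrA -Pu mulr_sumr.
      by apply: eq_bigr => y _; rewrite mulrA.
    by rewrite -mulr_suml o1 eqxx mul1r.
  by [].
split => //.
have := hn (\col_a (M k a)^*).
have -> : \sum_i `|(P *m \col_a (M k a)^*) i 0| ^+ 2 = L 0 k ^+ 2.
  transitivity (\sum_i (M k i * (M k i)^*) * L 0 k ^+ 2).
    apply: eq_bigr => i _; rewrite !mxE.
    have -> : \sum_j P i j * (\col_a (M k a)^*) j 0 = (M k i)^* * L 0 k.
      by rewrite -Pu; apply: eq_bigr => j _; rewrite mxE.
    rewrite normrM exprMn normCK conjCK ger0_norm //.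
    by rewrite (mulrC (_^*)).
  by rewrite -mulr_suml o1 eqxx mul1r.
have -> : \sum_i `|(\col_a (M k a)^*) i 0| ^+ 2 = 1.
  transitivity (\sum_i M k i * (M k i)^*); last by rewrite o1 eqxx.
  apply: eq_bigr => i _.
  by rewrite mxE normCK conjCK mulrC.
rewrite mulr1 ler_sqr //.
Qed.

Lemma prod_ind (I : finType) (b : I -> bool) :
  \prod_i ((b i)%:R : algC) = ([forall i, b i])%:R.
Proof.
case: (boolP [forall i, b i]) => [/forallP H|/forallPn [i Hi]].
  by rewrite big1 // => i _; rewrite H.
by rewrite (bigD1 i) //= (negbTE Hi) mul0r.
Qed.

Lemma expand n d (G : bool * bool -> 'I_d -> 'I_d -> algC)
  (F : 'I_n -> bool * bool -> algC) (y x : basisn n d) :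
  \prod_i (\sum_c F i c * G c (y i) (x i)) =
  \sum_(g : {ffun 'I_n -> bool * bool})
     (\prod_i F i (g i)) * \prod_i G (g i) (y i) (x i).
Proof.
rewrite bigA_distr_bigA; apply: eq_bigr => g _; by rewrite big_split.
Qed.

Lemma trace_pos n d (rho : basisn n d -> basisn n d -> algC) (hrho : psd rho)
  (B : 'I_n -> 'I_d -> 'I_d -> algC) (K : basisn n d -> basisn n d -> algC)
  (hK : forall y x, K y x = \prod_i (\sum_k (B i k (y i))^* * B i k (x i))) :
  0 <= \sum_x \sum_y rho x y * K y x.
Proof.
pose V (k : {ffun 'I_n -> 'I_d}) (z : basisn n d) := \prod_i B i (k i) (z i).
have E : forall y x, K y x = \sum_k (V k y)^* * V k x.
  move=> y x; rewrite hK bigA_distr_bigA; apply: eq_bigr => k _.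
  by rewrite big_split /= rmorph_prod.
have -> : \sum_x \sum_y rho x y * K y x =
    \sum_k \sum_x \sum_y ((V k x)^*)^* * rho x y * (V k y)^*.
  symmetry; rewrite exchange_big /=; apply: eq_bigr => x _.
  rewrite exchange_big /=; apply: eq_bigr => y _.
  rewrite E mulr_sumr; apply: eq_bigr => k _.
  rewrite conjCK; ring.
by apply: sumr_ge0 => k _; apply: (hrho.2 (fun z => (V k z)^*)).
Qed.

Lemma pick_sum (I : finType) (P : pred I) (i0 : I) (f : algC) :
  \sum_(i | P i) (i == i0)%:R * f = (P i0)%:R * f.
Proof.
rewrite big_mkcond (bigD1 i0) //= big1 ?addr0.
  by rewrite eqxx; case: (P i0); rewrite ?mul1r ?mul0r.
by move=> i /negbTE ->; case: (P i); rewrite ?mul0r.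
Qed.

Lemma cond_impl (n N N' : nat) (delta c : algC) : (N <= N')%N ->
  delta + c <= N%:R / n%:R -> n%:R * (delta + c) <= N'%:R.
Proof.
move=> hN; case: n => [|n] H; first by rewrite mul0r ler0n.
apply: le_trans (_ : N%:R <= _); last by rewrite ler_nat.
by rewrite mulrC -ler_pdivlMr // ltr0n.
Qed.

Lemma swap3 (G X Y : finType) (f : G -> algC) (F : G -> X -> Y -> algC) :
  \sum_g f g * (\sum_x \sum_y F g x y) = \sum_x \sum_y \sum_g f g * F g x y.
Proof.
under eq_bigr do rewrite mulr_sumr.
under eq_bigr do under eq_bigr do rewrite mulr_sumr.
rewrite exchange_big /=; apply: eq_bigr => x _; exact: exchange_big.
Qed.

Lemma sum_pair (F : bool * bool -> algC) :
  \sum_c F c = F (true, true) + F (true, false) + (F (false, true) + F (false, false)).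
Proof.
have -> : \sum_c F c = \sum_(p : bool * bool) F (p.1, p.2) by apply: eq_bigr => [[]].
by rewrite -(pair_bigA _ (fun a b => F (a, b))) /= !big_bool.
Qed.

Theorem lemma4 (d n : nat) (hd : (0 < d)%N)
  (rho : basisn n d -> basisn n d -> algC) (P : 'M[algC]_d) (delta c : algC)
  (hrho : is_state rho) (hP : is_two_povm P) (hnorm : opnorm_le P delta)
  (hdelta1 : delta <= 1) (hc : c \is Num.real) :
  prob_NP_ge rho P delta c <=
  \sum_(i < n.+1 | n%:R * (delta + c) <= i%:R)
     'C(n, i)%:R * delta ^+ i * (1 - delta) ^+ (n - i).
Proof.
have [M [lam [o2 o1 Pr lamb]]] := @spec d P delta hP.1 hnorm.
pose mu (c : bool * bool) (k : 'I_d) : algC :=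
  match c with (true, true) => lam k | (true, false) => delta - lam k
  | (false, true) => 1 - delta | (false, false) => 0 end.
pose G c (a b : 'I_d) := \sum_k (M k a)^* * mu c k * M k b.
have mu_ge0 : forall c k, 0 <= mu c k.
  by move=> [[] []] k /=; have [l0 l1] := lamb k; rewrite ?subr_ge0.
have Gf : forall c a b,
    G c a b = \sum_k (sqrtC (mu c k) * M k a)^* * (sqrtC (mu c k) * M k b).
  move=> c0 a b; apply: eq_bigr => k _.
  rewrite rmorphM /= (@geC0_conj _ (sqrtC (mu c0 k))) ?sqrtC_ge0 //.
  have := sqrtCK (mu c0 k); rewrite expr2 => e.
  rewrite -[mu c0 k in LHS]e; ring.
pose K (g : {ffun 'I_n -> bool * bool}) (y x : basisn n d) :=
  \prod_i G (g i) (y i) (x i).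
pose T g := \sum_x \sum_y rho x y * K g y x.
have Tpos : forall g, 0 <= T g.
  move=> g; apply: (@trace_pos n d rho hrho.1
     (fun i k b => sqrtC (mu (g i) k) * M k b)).
  by move=> y x; apply: eq_bigr => i _; rewrite Gf.
pose sg (g : {ffun 'I_n -> bool * bool}) := [ffun i => g i == (true, true)].
have povm_dec : forall (bb : bool) a b,
    povm_elem P bb a b = \sum_c ((bb == (c == (true, true)))%:R) * G c a b.
  move=> bb a b; rewrite sum_pair /=.
  case: bb => /=.
    by rewrite !mul0r !mul1r !addr0 Pr.
  rewrite !mul0r !mul1r add0r !mxE -o2 Pr -sumrB /G -!big_split /=.
  by apply: eq_bigr => k _; ring.
have Epovm : forall s y x,
    prod_elem P s y x = \sum_g (s == sg g)%:R * K g y x.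
  move=> s y x; rewrite /prod_elem.
  under eq_bigr do rewrite povm_dec.
  rewrite (@expand n d G (fun i c => (s i == (c == (true, true)))%:R)).
  apply: eq_bigr => g _; congr (_ * _); rewrite prod_ind; congr ((nat_of_bool _)%:R).
  apply/idP/idP => [/forallP H|/eqP ->]; last by apply/forallP => i; rewrite ffunE.
  by apply/eqP/ffunP => i; rewrite ffunE; apply/eqP.
have step1 : prob_NP_ge rho P delta c =
    \sum_g ((delta + c <= (NP (sg g))%:R / n%:R)%R : bool)%:R * T g.
  rewrite /prob_NP_ge /outcome_prob.
  have E1 : forall s, \sum_x \sum_y rho x y * prod_elem P s y x =
                      \sum_g (s == sg g)%:R * T g.
    move=> s; rewrite /T swap3; apply: eq_bigr => x _; apply: eq_bigr => y _.
    by rewrite Epovm mulr_sumr; apply: eq_bigr => g _; ring.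
  rewrite (eq_bigr _ (fun s _ => E1 s)) exchange_big /=.
  by apply: eq_bigr => g _; rewrite pick_sum.
pose wg (g : {ffun 'I_n -> bool * bool}) := [set i | (g i).1].
rewrite step1.
apply: (@le_trans _ _
   (\sum_g ((n%:R * (delta + c) <= #|wg g|%:R)%R : bool)%:R * T g)).
  apply: ler_sum => g _; case: (boolP (delta + c <= _)) => H.
    rewrite (@cond_impl n _ #|wg g| _ _ _ H) ?mul1r //.
    by apply/subset_leq_card/subsetP => i; rewrite !inE ffunE => /eqP ->.
  by rewrite mul0r; apply: mulr_ge0 => //; apply: ler0n.
have step3 : \sum_g ((n%:R * (delta + c) <= #|wg g|%:R)%R : bool)%:R * T g =
    \sum_(A : {set 'I_n} | n%:R * (delta + c) <= #|A|%:R)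
       delta ^+ #|A| * (1 - delta) ^+ (n - #|A|).
  under eq_bigr => g _ do rewrite -(@pick_sum _
     (fun A : {set 'I_n} => n%:R * (delta + c) <= #|A|%:R) (wg g)).
  rewrite exchange_big /=; apply: eq_bigr => A HA.
  pose h i := if i \in A then delta else 1 - delta.
  have Fdec : forall i a b, h i * (a == b)%:R =
      \sum_c (((i \in A) == c.1))%:R * G c a b.
    move=> i a b; rewrite sum_pair /= /h; case: (i \in A) => /=;
      rewrite !mul0r !mul1r ?addr0 ?add0r -o2 mulr_sumr /G -!big_split /=;
      by apply: eq_bigr => k _; ring.
  have HK : forall y x, \sum_g (A == wg g)%:R * K g y x =
      (\prod_i h i) * (y == x)%:R.
    move=> y x.
    transitivity (\prod_i (h i * (y i == x i)%:R)).
      symmetry; under eq_bigr do rewrite Fdec.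
      rewrite (@expand n d G (fun i c => (((i \in A) == c.1))%:R)).
      apply: eq_bigr => g _; congr (_ * _); rewrite prod_ind.
      congr ((nat_of_bool _)%:R).
      apply/idP/idP => [/forallP H|/eqP ->]; last by apply/forallP => i; rewrite inE.
      by apply/eqP/setP => i; rewrite inE; apply/eqP.
    rewrite big_split /= prod_ind; congr (_ * (nat_of_bool _)%:R).
    apply/idP/idP => [/forallP H|/eqP ->]; last by apply/forallP => i.
    by apply/eqP/ffunP => i; apply/eqP.
  transitivity ((\prod_i h i) * \sum_x rho x x).
    rewrite /T swap3 mulr_sumr; apply: eq_bigr => x _.
    transitivity (\sum_y rho x y * \sum_g (A == wg g)%:R * K g y x).
      by apply: eq_bigr => y _; rewrite mulr_sumr; apply: eq_bigr => g _; ring.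
    rewrite (eq_bigr (fun y => rho x y * ((\prod_i h i) * (y == x)%:R)));
      last by move=> y _; rewrite HK.
    set H := \prod_i h i.
    rewrite (bigD1 x) //= eqxx big1 ?addr0; first by rewrite mulr1 mulrC.
    by move=> y /negbTE ->; rewrite mulr0 mulr0.
  rewrite hrho.2 mulr1 /h (bigID (fun i => i \in A)) /=.
  rewrite [X in X * _ = _](eq_bigr (fun _ => delta)); last by move=> i ->.
  rewrite [X in _ * X = _](eq_bigr (fun _ => 1 - delta)); last first.
    by move=> i Hi; rewrite (negbTE Hi).
  rewrite [X in _ * X = _](eq_bigl (fun i => i \in ~: A)); last by move=> i; rewrite in_setC.
  rewrite !prodr_const; congr (_ * _ ^+ _).
  by rewrite cardsCs setCK card_ord.
rewrite step3.
rewrite le_eqVlt; apply/orP; left; apply/eqP.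
have cA : forall A : {set 'I_n}, (#|A| < n.+1)%N.
  by move=> A; rewrite ltnS -[X in (_ <= X)%N](card_ord n) max_card.
rewrite (partition_big (fun A : {set 'I_n} => (inord #|A| : 'I_n.+1))
   (fun j : 'I_n.+1 => n%:R * (delta + c) <= (j : nat)%:R)) /=; last first.
  by move=> A HA; rewrite inordK.
apply: eq_bigr => j Hj.
rewrite (eq_bigl (fun A => A \in [set A : {set 'I_n} | #|A| == j])); last first.
  move=> A; rewrite inE.
  have -> : (inord #|A| == j) = (#|A| == j :> nat).
    by rewrite -(inj_eq val_inj) /= inordK.
  by case: eqP => [->|]; rewrite ?andbT ?andbF.
rewrite (eq_bigr (fun _ => delta ^+ j * (1 - delta) ^+ (n - j))); last first.
  by move=> A; rewrite inE => /eqP ->.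
by rewrite sumr_const card_draws card_ord -[LHS]mulr_natl !mulrA.
Qed.
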